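(* Let $\mathfrak{q}$ be an $n\times n$ quantum parameter matrix over a field $k$, $V$ a $k$-vector space with basis $v_1,\dots,v_n$, and $r$ the number of distinct rows of $\mathfrak{q}$. Then $\mathrm{Aut}_{\mathrm{gr}}(S_{\mathfrak{q}}(V))\cong\big(\prod_{i=1}^r\mathrm{GL}(n_i,k)\big)\rtimes G$ for some positive integers $n_1,\dots,n_r$ and a group $G\subseteq\mathfrak{S}_r$ with the property that $H\subseteq G$ for every subgroup $H\subseteq\mathfrak{S}_r$ with $[r]^2/H=[r]^2/G$. Here $G=\mathrm{Stab}(\mathfrak{q})$.
   Context: An $n\times n$ quantum parameter matrix is a matrix $\mathfrak{q}=(q_{ij})$ over $k$ with $q_{ii}=1$ and $q_{ij}q_{ji}=1$. $S_{\mathfrak{q}}(V)$ is the $k$-algebra generated by $v_1,\dots,v_n$ with relations $v_jv_i=q_{ij}v_iv_j$, graded by $\deg v_i=1$; $\mathrm{Aut}_{\mathrm{gr}}$ is its group of degree-preserving algebra automorphisms. The blocks of $\mathfrak{q}$ are the classes of the partition of $[n]$ with $i\sim j$ iff rows $i,j$ are identical (there are $r$ of them); $\mathfrak{q}_{BC}=(q_{ij})_{i\in B,j\in C}$; $\mathfrak{S}_r$ permutes the blocks and $\mathrm{Stab}(\mathfrak{q})=\{\sigma\in\mathfrak{S}_r:|\sigma(B)|=|B|\text{ and }\mathfrak{q}_{BC}=\mathfrak{q}_{\sigma(B)\sigma(C)}\text{ for all blocks }B,C\}$. $\mathfrak{S}_r$ acts diagonally on $[r]^2$ and $[r]^2/H$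 denotes the partition of $[r]^2$ into $H$-orbits. *)

(* Defs.v *)
From HB Require Import structures.
From mathcomp Require Import all_boot all_order all_algebra all_fingroup.
Set Implicit Arguments. Unset Strict Implicit. Unset Printing Implicit Defensive.
Import GRing.Theory.
Local Open Scope ring_scope.

Section QuantumSymmetric.
Variable k : fieldType.

Definition qparam (n : nat) (q : 'M[k]_n) : Prop :=
  (forall i, q i i = 1) /\ (forall i j, q i j * q j i = 1).

Definition alg_hom (A B : algType k) (f : A -> B) : Prop :=
  (forall (a : k) (x y : A), f (a *: x + y) = a *: f x + f y) /\
  (forall x y : A, f (x * y) = f x * f y) /\ f 1 = 1.

Definition q_relations (n : nat) (q : 'M[k]_n) (B : algType k) (b : 'I_n -> B) : Prop :=
  forall i j, b j * b i = q i j *: (b i * b j).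

(* (A, v) is the k-algebra generated by v_1..v_n with relations v_j v_i = q_ij v_i v_j,
   i.e. S_q(V) with v_i the basis of V, given by its universal property. *)
Definition is_Sq (n : nat) (q : 'M[k]_n) (A : algType k) (v : 'I_n -> A) : Prop :=
  q_relations q v /\
  forall (B : algType k) (b : 'I_n -> B), q_relations q b ->
    (exists f : A -> B, alg_hom f /\ forall i, f (v i) = b i) /\
    (forall f1 f2 : A -> B, alg_hom f1 -> alg_hom f2 ->
       (forall i, f1 (v i) = f2 (v i)) -> f1 =1 f2).

Definition homog (n : nat) (A : algType k) (v : 'I_n -> A) (d : nat) (x : A) : Prop :=
  exists c : d.-tuple 'I_n -> k,
    x = \sum_(t : d.-tuple 'I_n) c t *: \prod_(i < d) v (tnth t i).

(* graded (degree-preserving) k-algebra automorphisms: elements of Aut_gr(S_q(V));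
   the group law is composition *)
Definition gr_aut (n : nat) (A : algType k) (v : 'I_n -> A) (f : A -> A) : Prop :=
  alg_hom f /\ bijective f /\ (forall d x, homog v d x -> homog v d (f x)).

(* blocks: block c = {i | beta i = c}; beta labels the classes of identical rows *)
Definition block (n r : nat) (beta : 'I_n -> 'I_r) (c : 'I_r) : {set 'I_n} :=
  [set i | beta i == c].

(* the submatrix q_{BC}, rows/columns in increasing order *)
Definition subq (n : nat) (q : 'M[k]_n) (B C : {set 'I_n}) : seq (seq k) :=
  [seq [seq q i j | j <- enum C] | i <- enum B].

Definition Stab (n r : nat) (q : 'M[k]_n) (beta : 'I_n -> 'I_r) : {set {perm 'I_r}} :=
  [set s : {perm 'I_r} |
    [forall b : 'I_r, #|block beta (s b)| == #|block beta b|] &&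
    [forall b : 'I_r, forall c : 'I_r,
       subq q (block beta b) (block beta c) == subq q (block beta (s b)) (block beta (s c))]].

(* transport of a square matrix along an equality of sizes (identity if sizes differ) *)
Definition mxtransp (m m' : nat) (M : 'M[k]_m) : 'M[k]_m' :=
  match m =P m' with
  | ReflectT e => castmx (e, e) M
  | ReflectF _ => 1%:M
  end.

(* the semidirect product (prod_c GL(n_c,k)) x| G, G acting by permuting factors:
   elements are pairs (g, s); (g, s) (h, t) = (c |-> g_c h_{s c}, s * t)
   (mathcomp: (s * t) x = t (s x), so this is a left action). *)
Definition sd_elt (r : nat) (n_ : 'I_r -> nat) : Type :=
  ({dffun forall c : 'I_r, 'M[k]_(n_ c)} * {perm 'I_r})%type.

Definition sd_in (r : nat) (n_ : 'I_r -> nat) (G : {set {perm 'I_r}}) (x : sd_elt n_) : Prop :=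
  (forall c, x.1 c \in unitmx) /\ x.2 \in G.

Definition sd_mul (r : nat) (n_ : 'I_r -> nat) (x y : sd_elt n_) : sd_elt n_ :=
  (finfun (fun c : 'I_r => x.1 c *m @mxtransp (n_ (x.2 c)) (n_ c) (y.1 (x.2 c)) : 'M[k]_(n_ c)), (x.2 * y.2)%g).

End QuantumSymmetric.

(* [r]^2/H : the partition of [r]^2 into orbits of the diagonal action of H *)
Definition diagorb (r : nat) (H : {set {perm 'I_r}}) (x : 'I_r * 'I_r) : {set 'I_r * 'I_r} :=
  [set ((h : {perm 'I_r}) x.1, h x.2) | h in H].

Definition diag_orbit_partition (r : nat) (H : {set {perm 'I_r}}) : {set {set 'I_r * 'I_r}} :=
  [set diagorb H x | x : 'I_r * 'I_r].

(* Main.v *)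
Require Import Defs.
From HB Require Import structures.
From mathcomp Require Import all_boot all_order all_algebra all_fingroup.
From mathcomp Require Import ring.
Import GRing.Theory.
Local Open Scope ring_scope.

Module Helpers.
Set Implicit Arguments. Unset Strict Implicit. Unset Printing Implicit Defensive.

Section AlgHom.
Variable k : fieldType.
Variables (A B C : algType k).

Lemma ah0 (f : A -> B) : alg_hom f -> f 0 = 0.
Proof.
case=> lin _; have := lin (-1) 0 0.
by rewrite scaler0 addr0 scaleN1r addNr.
Qed.

Lemma ahD (f : A -> B) : alg_hom f -> forall x y, f (x + y) = f x + f y.
Proof. by move=> hf x y; case: (hf) => lin _; have := lin 1 x y; rewrite !scale1r. Qed.

Lemma ahZ (f : A -> B) : alg_hom f -> forall a x, f (a *: x) = a *: f x.
Proof. by move=> hf a x; case: (hf) => lin _; have := lin a x 0; rewrite !addr0 (ah0 hf) addr0. Qed.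

Lemma ahM (f : A -> B) : alg_hom f -> forall x y, f (x * y) = f x * f y.
Proof. by case=> _ []. Qed.

Lemma ah1 (f : A -> B) : alg_hom f -> f 1 = 1.
Proof. by case=> _ []. Qed.

Lemma ah_sum (f : A -> B) (I : Type) (s : seq I) (P : pred I) (F : I -> A) :
  alg_hom f -> f (\sum_(i <- s | P i) F i) = \sum_(i <- s | P i) f (F i).
Proof. by move=> hf; apply: big_morph; [exact: ahD | exact: ah0]. Qed.

Lemma ah_prod (f : A -> B) (I : Type) (s : seq I) (P : pred I) (F : I -> A) :
  alg_hom f -> f (\prod_(i <- s | P i) F i) = \prod_(i <- s | P i) f (F i).
Proof. by move=> hf; apply: big_morph; [exact: ahM | exact: ah1]. Qed.

Lemma ah_lin (f : A -> B) (I : Type) (s : seq I) (P : pred I) (c : I -> k) (F : I -> A) :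
  alg_hom f -> f (\sum_(i <- s | P i) c i *: F i) = \sum_(i <- s | P i) c i *: f (F i).
Proof. by move=> hf; rewrite ah_sum //; apply: eq_bigr => i _; rewrite ahZ. Qed.

Lemma ah_id : alg_hom (@id A).
Proof. by []. Qed.

End AlgHom.

Lemma ah_comp (k : fieldType) (A B C : algType k) (f : B -> C) (g : A -> B) : alg_hom f -> alg_hom g -> alg_hom (f \o g).
Proof.
move=> hf hg; split; last split.
- by move=> a x y /=; rewrite (ahD hg) (ahZ hg) (ahD hf) (ahZ hf).
- by move=> x y /=; rewrite (ahM hg) (ahM hf).
- by rewrite /= (ah1 hg) (ah1 hf).
Qed.


Section Models.
Variable k : fieldType.

Definition X3 : 'M[k]_3 := \matrix_(i, j) ((i : nat) == j.+1)%:R.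
Definition X4 : 'M[k]_4 := \matrix_(i, j)
  ((((i : nat) == 1%N) && ((j : nat) == 0%N)) || (((i : nat) == 3%N) && ((j : nat) == 2%N)))%:R.
Definition Y4 (c : k) : 'M[k]_4 := \matrix_(i, j)
  (if ((i : nat) == 2%N) && ((j : nat) == 0%N) then 1 else
   if ((i : nat) == 3%N) && ((j : nat) == 1%N) then c else 0).

Definition o0 : 'I_4 := @Ordinal 4 0 isT.
Definition o3 : 'I_4 := @Ordinal 4 3 isT.
Definition p0 : 'I_3 := @Ordinal 3 0 isT.
Definition p2 : 'I_3 := @Ordinal 3 2 isT.

Lemma X3E (al ga : k) : ((al *: X3) * (ga *: X3)) p2 p0 = al * ga.
Proof.
rewrite -scalerAl -scalerAr !mxE !big_ord_recl !big_ord0 !mxE /=.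
by rewrite ?(mul0r, mulr0, mul1r, addr0, add0r, mulr1, scale0r, scaler0, scale1r, mxE).
Qed.

Lemma X3E1 (al : k) : ((al *: X3) * X3) p2 p0 = al.
Proof. by rewrite -[X in _ * X]scale1r X3E mulr1. Qed.

Lemma X3_0E (M : 'M[k]_3) : (M * 0) p2 p0 = 0.
Proof. by rewrite mulr0 mxE. Qed.

Lemma XY4E (al be ga de c : k) :
  ((al *: X4 + be *: Y4 c) * (ga *: X4 + de *: Y4 c)) o3 o0 = al * de + be * ga * c.
Proof.
rewrite !mxE !big_ord_recl !big_ord0 !mxE /=.
rewrite !(mul0r, mulr0, mul1r, addr0, add0r, mulr1).
ring.
Qed.

Lemma XY4E1 (al be c : k) :
  ((al *: X4 + be *: Y4 c) * X4) o3 o0 = be * c.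
Proof.
rewrite !mxE !big_ord_recl !big_ord0 !mxE /=.
rewrite !(mul0r, mulr0, mul1r, addr0, add0r, mulr1).
done.
Qed.

Lemma X4X4 : X4 * X4 = 0.
Proof.
apply/matrixP => i j; rewrite !mxE !big_ord_recl !big_ord0 !mxE /=.
case: i => [[|[|[|[|?]]]] ?] //=; case: j => [[|[|[|[|?]]]] ?] //=;
by rewrite ?(mul0r, mulr0, mul1r, addr0, add0r, mulr1, scale0r, scaler0, scale1r, mxE).
Qed.

Lemma Y4Y4 c : Y4 c * Y4 c = 0.
Proof.
apply/matrixP => i j; rewrite !mxE !big_ord_recl !big_ord0 !mxE /=.
case: i => [[|[|[|[|?]]]] ?] //=; case: j => [[|[|[|[|?]]]] ?] //=;
by rewrite ?(mul0r, mulr0, mul1r, addr0, add0r, mulr1, scale0r, scaler0, scale1r, mxE).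
Qed.

Lemma Y4X4 c : Y4 c * X4 = c *: (X4 * Y4 c).
Proof.
apply/matrixP => i j; rewrite !mxE !big_ord_recl !big_ord0 !mxE /=.
case: i => [[|[|[|[|?]]]] ?] //=; case: j => [[|[|[|[|?]]]] ?] //=;
by rewrite ?(mul0r, mulr0, mul1r, addr0, add0r, mulr1, scale0r, scaler0, scale1r, mxE).
Qed.

End Models.

Section Core.
Variable k : fieldType.
Variables (n : nat) (q : 'M[k]_n) (A : algType k) (v : 'I_n -> A).
Hypothesis Hq : qparam q.
Hypothesis HS : is_Sq q v.

Lemma qii i : q i i = 1. Proof. by case: Hq. Qed.
Lemma qq i j : q i j * q j i = 1. Proof. by case: Hq. Qed.
Lemma q_neq0 i j : q i j != 0.
Proof. by apply/eqP => h; have := qq i j; rewrite h mul0r => /eqP; rewrite eq_sym oner_eq0. Qed.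
Lemma qV i j : q i j = (q j i)^-1.
Proof. by apply: (mulIf (q_neq0 j i)); rewrite qq mulVf ?q_neq0. Qed.

Lemma model0 : exists P : A -> 'M[k]_n.+1, alg_hom P /\
  forall b, P (v b) = delta_mx (lift ord0 b) ord0.
Proof.
have [h _] := HS.
have rel : q_relations q (fun b => delta_mx (lift ord0 b) ord0 : 'M[k]_n.+1).
  by move=> i j; rewrite -!mulmxE !mul_delta_mx_cond; rewrite !(negbTE (neq_lift _ _)) !mulr0n scaler0.
by have [[P [hP hPv]] _] := HS.2 _ _ rel; exists P.
Qed.

Lemma model1 a : exists P : A -> 'M[k]_3, alg_hom P /\
  forall b, P (v b) = if b == a then X3 k else 0.
Proof.
have rel : q_relations q (fun b => if b == a then X3 k else 0).
  move=> i j; case: eqP => [->|_]; case: eqP => [->|_];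
  by rewrite ?qii ?scale1r ?mulr0 ?mul0r ?scaler0.
by have [[P [hP hPv]] _] := HS.2 _ _ rel; exists P.
Qed.

Lemma model2 e a : e != a -> exists P : A -> 'M[k]_4, alg_hom P /\
  forall b, P (v b) = if b == e then X4 k else if b == a then Y4 (q e a) else 0.
Proof.
move=> nea.
have rel : q_relations q (fun b => if b == e then X4 k else if b == a then Y4 (q e a) else 0).
  move=> i j.
  case: (i =P e) => [->|ie]; case: (j =P e) => [->|je].
  - by rewrite qii scale1r.
  - case: (j =P a) => [->|ja]; last by rewrite mul0r mulr0 scaler0.
    by rewrite Y4X4.
  - case: (i =P a) => [->|ia]; last by rewrite mul0r mulr0 scaler0.
    by rewrite Y4X4 scalerA [q a e * _]mulrC qq scale1r.
  - case: (i =P a) => [->|ia]; case: (j =P a) => [->|ja];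
    by rewrite ?qii ?scale1r ?mulr0 ?mul0r ?scaler0.
by have [[P [hP hPv]] _] := HS.2 _ _ rel; exists P.
Qed.

Lemma sum_pick (B : lmodType k) (a : 'I_n) (c : 'I_n -> k) (X : B) :
  \sum_b c b *: (if b == a then X else 0) = c a *: X.
Proof.
rewrite (bigD1 a) //= eqxx big1 ?addr0 // => b /negbTE ->; exact: scaler0.
Qed.

Lemma sum_pick2 (B : lmodType k) (e a : 'I_n) (c : 'I_n -> k) (X Y : B) : e != a ->
  \sum_b c b *: (if b == e then X else if b == a then Y else 0) = c e *: X + c a *: Y.
Proof.
move=> nea; rewrite (bigD1 e) //= eqxx (bigD1 a) 1?eq_sym //= eqxx (negbTE nea) addrA.
rewrite big1 ?addr0 // => b /andP [/negbTE -> /negbTE ->]; exact: scaler0.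
Qed.

Variable P0 : A -> 'M[k]_n.+1.
Hypothesis hP0 : alg_hom P0.
Hypothesis hP0v : forall b, P0 (v b) = delta_mx (lift ord0 b) ord0.

Definition coef (b : 'I_n) (z : A) : k := P0 z (lift ord0 b) ord0.

Lemma coef_sum (c : 'I_n -> k) b : coef b (\sum_a c a *: v a) = c b.
Proof.
rewrite /coef ah_lin // summxE (bigD1 b) //= big1.
  by rewrite hP0v !mxE !eqxx mulr1 addr0.
by move=> a nab; rewrite hP0v !mxE (inj_eq lift_inj) eq_sym (negbTE nab) mulr0.
Qed.

Lemma coef_lin b (x y : A) (a : k) : coef b (a *: x + y) = a * coef b x + coef b y.
Proof. by rewrite /coef (ahD hP0) (ahZ hP0) !mxE. Qed.

Lemma span_coef (c : 'I_n -> k) : let z := \sum_a c a *: v a in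
  z = \sum_a coef a z *: v a.
Proof. by move=> z; apply: eq_bigr => a _; rewrite coef_sum. Qed.

Lemma span_inj (c d : 'I_n -> k) : \sum_a c a *: v a = \sum_a d a *: v a -> c =1 d.
Proof. by move=> h b; rewrite -(coef_sum c) h coef_sum. Qed.


Lemma homog1 z : homog v 1 z -> z = \sum_a coef a z *: v a.
Proof.
case=> c ->.
have -> : \sum_(t : 1.-tuple 'I_n) c t *: \prod_(i < 1) v (tnth t i) =
          \sum_a c [tuple a] *: v a.
  rewrite (reindex (fun a : 'I_n => [tuple a])) /=; last first.
    exists (fun t => tnth t ord0) => [a _ //|t _].
    by apply: eq_from_tnth => i; rewrite (ord1 i).
  by apply: eq_bigr => a _; rewrite big_ord1.
exact: span_coef.
Qed.

Lemma homog_span (c : 'I_n -> k) : homog v 1 (\sum_a c a *: v a).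
Proof.
exists (fun t => c (tnth t ord0)).
rewrite (reindex (fun a : 'I_n => [tuple a])) /=; last first.
  exists (fun t => tnth t ord0) => [a _ //|t _].
  by apply: eq_from_tnth => i; rewrite (ord1 i).
by apply: eq_bigr => a _; rewrite big_ord1.
Qed.

Lemma homog_map (f : A -> A) (m : 'M[k]_n) d z :
  alg_hom f -> (forall i, f (v i) = \sum_a m a i *: v a) ->
  homog v d z -> homog v d (f z).
Proof.
move=> hf hv [c ->].
rewrite ah_lin //.
have E t : f (\prod_(i < d) v (tnth t i)) =
    \sum_(g : {ffun 'I_d -> 'I_n}) (\prod_(i < d) m (g i) (tnth t i)) *: \prod_(i < d) v (g i).
  rewrite ah_prod // (eq_bigr _ (fun i _ => hv _)).
  rewrite bigA_distr_bigA /=; apply: eq_bigr => g _; by rewrite scaler_prod.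
under eq_bigr do rewrite E scaler_sumr.
rewrite exchange_big /=.
exists (fun t' => \sum_(t : d.-tuple 'I_n) c t * \prod_(i < d) m (tnth t' i) (tnth t i)).
rewrite (reindex (fun t' : d.-tuple 'I_n => [ffun i => tnth t' i])) /=; last first.
  exists (fun g : {ffun 'I_d -> 'I_n} => [tuple g i | i < d]) => [t _|g _].
    by apply: eq_from_tnth => i; rewrite tnth_mktuple ffunE.
  by apply/ffunP => i; rewrite ffunE tnth_mktuple.
apply: eq_bigr => t' _; rewrite scaler_suml; apply: eq_bigr => t _.
rewrite scalerA; congr (_ *: _); last by apply: eq_bigr => i _; rewrite ffunE.
by congr (_ * _); apply: eq_bigr => i _; rewrite ffunE.
Qed.


Lemma v_span i : v i = \sum_a (a == i)%:R *: v a.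
Proof.
rewrite (bigD1 i) //= eqxx scale1r big1 ?addr0 // => a /negbTE ->; exact: scale0r.
Qed.

Definition mat (f : A -> A) : 'M[k]_n := \matrix_(a, i) coef a (f (v i)).

Lemma gr_rep f : gr_aut v f -> forall i, f (v i) = \sum_a mat f a i *: v a.
Proof.
move=> [hf [_ hg]] i; rewrite (homog1 (hg 1%N _ _)).
  by apply: eq_bigr => a _; rewrite mxE.
by rewrite v_span; exact: homog_span.
Qed.

Lemma rep_apply (f : A -> A) (M : 'M[k]_n) (c : 'I_n -> k) :
  alg_hom f -> (forall i, f (v i) = \sum_a M a i *: v a) ->
  f (\sum_i c i *: v i) = \sum_a (\sum_i M a i * c i) *: v a.
Proof.
move=> hf hv; rewrite ah_lin //.
under eq_bigr do rewrite hv scaler_sumr.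
rewrite exchange_big /=; apply: eq_bigr => a _; rewrite scaler_suml.
by apply: eq_bigr => i _; rewrite scalerA mulrC.
Qed.

Lemma mat_rep (f : A -> A) (M : 'M[k]_n) :
  (forall i, f (v i) = \sum_a M a i *: v a) -> mat f = M.
Proof. by move=> hv; apply/matrixP => a i; rewrite mxE hv coef_sum. Qed.

Lemma rep_comp (f g : A -> A) (M N : 'M[k]_n) :
  alg_hom f -> (forall i, f (v i) = \sum_a M a i *: v a) ->
  (forall i, g (v i) = \sum_a N a i *: v a) ->
  forall i, (f \o g) (v i) = \sum_a (M *m N) a i *: v a.
Proof.
move=> hf hM hN i /=; rewrite hN (rep_apply _ hf hM).
by apply: eq_bigr => a _; rewrite mxE.
Qed.

Lemma ker_unit (M : 'M[k]_n) : (forall z : 'cV[k]_n, M *m z = 0 -> z = 0) -> M \in unitmx.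
Proof.
move=> h; rewrite -unitmx_tr -row_free_unit -kermx_eq0; apply/eqP/row_matrixP => i.
rewrite row0; set u := row i _.
have : u *m M^T = 0 by rewrite /u -row_mul mulmx_ker row0.
move/(congr1 trmx); rewrite trmx_mul trmxK trmx0 => /h /(congr1 trmx).
by rewrite trmxK trmx0.
Qed.

Lemma mat_unit f : gr_aut v f -> mat f \in unitmx.
Proof.
move=> hfa; have [hf [[g fK _] _]] := hfa.
apply: ker_unit => z hz.
have h0 : f (\sum_i z i 0 *: v i) = f 0.
  rewrite (rep_apply _ hf (gr_rep hfa)) (ah0 hf).
  rewrite big1 // => a _; have := congr1 (fun M : 'M[k]_(n,1) => M a 0) hz; rewrite !mxE => ->.
  exact: scale0r.
have := congr1 g h0; rewrite !fK => h1.
apply/matrixP => i j; rewrite (ord1 j) mxE.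
have := span_inj (c := fun i => z i 0) (d := fun _ => 0); apply.
by rewrite h1 big1 // => a _; rewrite scale0r.
Qed.

Lemma finv f : gr_aut v f -> exists g, [/\ gr_aut v g, cancel f g, cancel g f &
  forall i, g (v i) = \sum_a invmx (mat f) a i *: v a].
Proof.
move=> hfa; have [hf [[g fK gK] hgr]] := hfa.
have Mu := mat_unit hfa.
have hg : alg_hom g.
  split; last split.
  - by move=> a x y; apply: (can_inj fK); rewrite gK (ahD hf) (ahZ hf) !gK.
  - by move=> x y; apply: (can_inj fK); rewrite gK (ahM hf) !gK.
  - by apply: (can_inj fK); rewrite gK (ah1 hf).
have gv i : g (v i) = \sum_a invmx (mat f) a i *: v a.
  apply: (can_inj fK); rewrite gK (rep_apply _ hf (gr_rep hfa)) [LHS]v_span.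
  by apply: eq_bigr => a _; have := mulmxV Mu => /matrixP/(_ a i); rewrite !mxE => <-.
exists g; split => //; split => //; split; first by exists f.
by move=> d z; apply: homog_map.
Qed.


Lemma model_img (B : algType k) (P : A -> B) (img : 'I_n -> B) (c : 'I_n -> k) :
  alg_hom P -> (forall b, P (v b) = img b) ->
  P (\sum_b c b *: v b) = \sum_b c b *: img b.
Proof. by move=> hP hPv; rewrite ah_lin //; apply: eq_bigr => b _; rewrite hPv. Qed.

Lemma key_W f i e : gr_aut v f ->
  f (v i) * v e = (\sum_b (\sum_j mat f b j * (invmx (mat f) j e * q j i)) *: v b) * f (v i).
Proof.
move=> hfa.
have [g [hg fg gf gv]] := finv hfa.
have hf : alg_hom f := hfa.1.
rewrite -{1}(gf (v e)) gv -(ahM hf) mulr_sumr.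
under eq_bigr do rewrite -scalerAr (HS.1 _ i) scalerA scalerAl.
by rewrite -mulr_suml (ahM hf) (rep_apply _ hf (gr_rep hfa)).
Qed.

Lemma W f i e a : gr_aut v f -> mat f a i != 0 ->
  q e a = \sum_j mat f e j * (invmx (mat f) j e * q j i).
Proof.
move=> hfa nz.
have hf : alg_hom f := hfa.1.
pose x b := mat f b i.
pose W b := \sum_j mat f b j * (invmx (mat f) j e * q j i).
have key : (\sum_b x b *: v b) * v e = (\sum_b W b *: v b) * (\sum_b x b *: v b).
  by have := key_W i e hfa; rewrite (gr_rep hfa i).
have {}nz : x a != 0 by [].
rewrite -/(W e).
have eq1e : x e = W e * x e.
  have [P [hP hPv]] := model1 e.
  have := congr1 (fun z => P z p2 p0) key; rewrite /= !(ahM hP) !(model_img _ hP hPv) !sum_pick.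
  by rewrite hPv eqxx X3E1 X3E.
case: (a =P e) => [ae|ane].
  rewrite ae qii; rewrite ae in nz.
  by apply/esym/(mulIf nz); rewrite mul1r -eq1e.
have eq1a : 0 = W a * x a.
  have [P [hP hPv]] := model1 a.
  have := congr1 (fun z => P z p2 p0) key; rewrite /= !(ahM hP) !(model_img _ hP hPv) !sum_pick.
  by rewrite hPv (introF eqP (nesym ane)) X3_0E X3E.
have nea : e != a by apply/eqP => h; apply: ane.
have eq2 : x a * q e a = W e * x a + W a * x e * q e a.
  have [P [hP hPv]] := model2 nea.
  have := congr1 (fun z => P z o3 o0) key; rewrite /= !(ahM hP) !(model_img _ hP hPv) !sum_pick2 //.
  rewrite hPv eqxx.
  by rewrite XY4E1 XY4E.
case: (x e =P 0) => [xe0|xe0].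
  by move: eq2; rewrite xe0 mulr0 mul0r addr0 mulrC => /(mulIf nz).
have We1 : W e = 1 by apply/esym/(mulIf (introN eqP xe0)); rewrite mul1r -eq1e.
have Wa0 : W a = 0.
  by apply/eqP; move: eq1a => /esym/eqP; rewrite mulf_eq0 (negbTE nz) orbF.
move: eq2; rewrite Wa0 We1 !mul0r addr0 mul1r => /eqP.
rewrite -{2}[x a]mulr1 (inj_eq (mulfI nz)) => /eqP ->; done.
Qed.


Lemma sum_nz (I : finType) (F : I -> k) : \sum_b F b != 0 -> exists b, F b != 0.
Proof.
move=> h; case: (pickP (fun b => F b != 0)) => [b hb|none]; first by exists b.
by move: h; rewrite big1 ?eqxx // => b _; apply/eqP; rewrite -[_ == _]negbK none.
Qed.

Lemma prod_nz (M N : 'M[k]_n) : M *m N = 1%:M -> forall a, exists i, (M a i != 0) && (N i a != 0).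
Proof.
move=> h a; have := congr1 (fun X : 'M[k]_n => X a a) h; rewrite !mxE eqxx => e.
have [i] : exists i, M a i * N i a != 0 by apply: sum_nz; rewrite e oner_eq0.
by rewrite mulf_eq0 negb_or => hi; exists i.
Qed.

Variables (r : nat) (beta : 'I_n -> 'I_r).
Hypothesis Hsurj : forall c : 'I_r, exists i, beta i = c.
Hypothesis Hrow : forall i j : 'I_n, (beta i == beta j) = (row i q == row j q).

Definition bl (c : 'I_r) := block beta c.
Definition nb (c : 'I_r) := #|bl c|.

Lemma mem_bl i c : (i \in bl c) = (beta i == c).
Proof. by rewrite inE. Qed.

Lemma rowq_eq i j x : beta i = beta j -> q i x = q j x.
Proof.
move=> h; have := Hrow i j; rewrite h eqxx => /esym/eqP/matrixP/(_ 0 x).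
by rewrite !mxE.
Qed.

Lemma colq_eq i j x : beta i = beta j -> q x i = q x j.
Proof. by move=> h; rewrite qV (qV x j) (rowq_eq _ h). Qed.

Lemma q_block x x' y y' : beta x = beta x' -> beta y = beta y' -> q x y = q x' y'.
Proof. by move=> hx hy; rewrite (rowq_eq _ hx) (colq_eq _ hy). Qed.

Lemma beta_of_cols a a' : (forall e, q e a = q e a') -> beta a = beta a'.
Proof.
move=> h; apply/eqP; rewrite Hrow; apply/eqP/matrixP => i x.
by rewrite !mxE qV h -qV.
Qed.

Lemma bl_nz c : exists a, beta a = c.
Proof. exact: Hsurj. Qed.

Definition BM (M : 'M[k]_n) (s : 'I_r -> 'I_r) := forall a i, M a i != 0 -> beta i = s (beta a).

Lemma CL f a a' i i' : gr_aut v f -> mat f a i != 0 -> mat f a' i' != 0 ->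
  beta i = beta i' -> beta a = beta a'.
Proof.
move=> hfa nz nz' hi; apply: beta_of_cols => e.
rewrite (W e hfa nz) (W e hfa nz'); apply: eq_bigr => j _.
by rewrite (colq_eq _ hi).
Qed.

Lemma finv_mat f : gr_aut v f -> exists g, [/\ gr_aut v g, cancel f g, cancel g f &
  mat g = invmx (mat f)].
Proof.
move=> hfa; have [g [hg fg gf gv]] := finv hfa.
by exists g; split => //; apply: mat_rep.
Qed.

Lemma RL f a a' i i' : gr_aut v f -> mat f a i != 0 -> mat f a' i' != 0 ->
  beta a = beta a' -> beta i = beta i'.
Proof.
move=> hfa nz nz' ha.
have [g [hg _ _ hN]] := finv_mat hfa.
have NM : mat g *m mat f = 1%:M by rewrite hN mulVmx // mat_unit.
have [b /andP [nb1 nb2]] := prod_nz NM i.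
have [b' /andP [nb1' nb2']] := prod_nz NM i'.
have e1 := CL hfa nz nb2 (erefl _).
have e2 := CL hfa nz' nb2' (erefl _).
apply: (CL hg nb1 nb1'); by rewrite -e1 -e2.
Qed.

Definition sfun (M : 'M[k]_n) (d : 'I_r) : 'I_r :=
  match [pick p : 'I_n * 'I_n | (beta p.1 == d) && (M p.1 p.2 != 0)] with
  | Some p => beta p.2 | None => d end.

Definition sM (M : 'M[k]_n) : {perm 'I_r} :=
  match injectiveP (sfun M) with ReflectT inj => perm inj | ReflectF _ => 1%g end.

Lemma sM_E M : injective (sfun M) -> sM M =1 sfun M.
Proof.
rewrite /sM => inj; case: injectiveP => [inj'|//]; exact: permE.
Qed.

Lemma sfun_spec M (s : {perm 'I_r}) : BM M s -> (forall a, exists i, M a i != 0) -> sfun M =1 s.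
Proof.
move=> hb hr d; have [a ha] := Hsurj d; have [i hi] := hr a.
rewrite /sfun; case: pickP => [p /andP [/eqP h1 h2]|none].
  by rewrite (hb _ _ h2) h1.
by have := none (a, i); rewrite /= ha eqxx hi.
Qed.

Lemma sM_spec M (s : {perm 'I_r}) : BM M s -> (forall a, exists i, M a i != 0) -> sM M = s.
Proof.
move=> hb hr; have e := sfun_spec hb hr.
have inj : injective (sfun M) by apply: (eq_inj perm_inj) => x; rewrite e.
by apply/permP => d; rewrite sM_E // e.
Qed.

Lemma unit_rows (M : 'M[k]_n) : M \in unitmx -> forall a, exists i, M a i != 0.
Proof.
move=> u a; have [i /andP [h _]] := prod_nz (mulmxV u) a; by exists i.
Qed.

Lemma SL0 f : gr_aut v f -> BM (mat f) (sM (mat f)).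
Proof.
move=> hfa.
have hr := unit_rows (mat_unit hfa).
have hb : BM (mat f) (sfun (mat f)).
  move=> a i nz; rewrite /sfun; case: pickP => [p /andP [/eqP h1 h2]|none].
    by apply: (RL hfa nz h2); rewrite h1.
  by have := none (a, i); rewrite /= eqxx nz.
have inj : injective (sfun (mat f)).
  move=> d d' e.
  have [a ha] := Hsurj d; have [i hi] := hr a.
  have [a' ha'] := Hsurj d'; have [i' hi'] := hr a'.
  rewrite -ha -ha'; apply: (CL hfa hi hi').
  by rewrite (hb _ _ hi) (hb _ _ hi') ha ha'.
by move=> a i nz; rewrite sM_E //; exact: hb.
Qed.

Lemma BM_mul M N (s t : {perm 'I_r}) : BM M s -> BM N t -> BM (M *m N) (s * t)%g.
Proof.
move=> hM hN a i; rewrite mxE => /sum_nz [b]; rewrite mulf_eq0 negb_or => /andP [h1 h2].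
by rewrite permM (hN _ _ h2) (hM _ _ h1).
Qed.


Lemma sum_ev (B : {set 'I_n}) (G : 'I_n -> k) :
  \sum_(x < #|B|) G (enum_val x) = \sum_(a in B) G a.
Proof. by rewrite (big_enum_val (A := [in B])). Qed.

Lemma size_le M N (s : {perm 'I_r}) d : BM M s -> N *m M = 1%:M -> (nb (s d) <= nb d)%N.
Proof.
move=> hM NM; rewrite /nb.
pose P := \matrix_(x < #|bl d|, y < #|bl (s d)|) M (enum_val x) (enum_val y).
pose Q := \matrix_(y < #|bl (s d)|, x < #|bl d|) N (enum_val y) (enum_val x).
have QP : Q *m P = 1%:M.
  apply/matrixP => y y'; rewrite !mxE.
  under eq_bigr do rewrite !mxE.
  rewrite (sum_ev (bl d) (fun a => N (enum_val y) a * M a (enum_val y'))).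
  have := congr1 (fun X : 'M[k]_n => X (enum_val y) (enum_val y')) NM.
  rewrite !mxE (inj_eq enum_val_inj) => <-.
  rewrite [RHS](bigID (fun a => a \in bl d)) /= [X in _ = _ + X]big1 ?addr0 //.
  move=> a ha; apply/eqP; rewrite mulf_eq0; apply/orP; right; apply/negPn/negP => nz.
  move: (hM _ _ nz); have := enum_valP y'; rewrite mem_bl => /eqP -> /perm_inj e.
  by move: ha; rewrite mem_bl e eqxx.
have := mxrankM_maxr Q P; rewrite QP mxrank1 => h.
exact: leq_trans h (rank_leq_row P).
Qed.

Lemma claimA f a i e j : gr_aut v f -> mat f a i != 0 -> mat f e j != 0 -> q e a = q j i.
Proof.
move=> hfa nz nz'.
have hb := SL0 hfa.
rewrite (W e hfa nz).
have u := mat_unit hfa.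
have -> : \sum_j0 mat f e j0 * (invmx (mat f) j0 e * q j0 i) =
          \sum_j0 mat f e j0 * invmx (mat f) j0 e * q j i.
  apply: eq_bigr => l _.
  case: (mat f e l =P 0) => [->|nzl]; first by rewrite !mul0r.
  rewrite mulrA; congr (_ * _); apply: q_block => //.
  by rewrite (hb _ _ (introN eqP nzl)) (hb _ _ nz').
rewrite -mulr_suml; have := mulmxV u => /matrixP/(_ e e); rewrite !mxE eqxx => ->.
by rewrite mul1r.
Qed.

Lemma mapK (T : eqType) (s : seq T) (F : T -> seq k) K :
  (forall x, x \in s -> F x = K) -> map F s = nseq (size s) K.
Proof.
elim: s => //= x s IH h; rewrite h ?mem_head // IH // => y ys; apply: h.
by rewrite in_cons ys orbT.
Qed.

Lemma mapK' (T : eqType) (s : seq T) (F : T -> k) K :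
  (forall x, x \in s -> F x = K) -> map F s = nseq (size s) K.
Proof.
elim: s => //= x s IH h; rewrite h ?mem_head // IH // => y ys; apply: h.
by rewrite in_cons ys orbT.
Qed.

Lemma subq_const (B C : {set 'I_n}) K : (forall x y, x \in B -> y \in C -> q x y = K) ->
  Defs.subq q B C = nseq #|B| (nseq #|C| K).
Proof.
move=> h; rewrite /Defs.subq [#|B|]cardE; apply: mapK => x; rewrite mem_enum => xB.
by rewrite cardE; apply: mapK' => y; rewrite mem_enum => yC; apply: h.
Qed.

Lemma nseq2_inj m p m' p' (K K' : k) : (0 < m)%N -> (0 < p)%N ->
  nseq m (nseq p K) = nseq m' (nseq p' K') -> K = K'.
Proof.
case: m => // m _; case: p => // p _; case: m' => [|m'] //=; case: p' => [|p'] //=.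
by case.
Qed.

Lemma nb_pos c : (0 < nb c)%N.
Proof. by have [a ha] := Hsurj c; apply/card_gt0P; exists a; rewrite mem_bl ha. Qed.

Lemma subq_bl c d x y : beta x = c -> beta y = d ->
  Defs.subq q (bl c) (bl d) = nseq (nb c) (nseq (nb d) (q x y)).
Proof.
move=> hx hy; apply: subq_const => x' y'; rewrite !mem_bl => /eqP hx' /eqP hy'.
by apply: q_block; rewrite ?hx ?hy ?hx' ?hy'.
Qed.

Lemma Stab_q (s : {perm 'I_r}) : s \in Stab q beta ->
  forall x y x' y', beta x' = s (beta x) -> beta y' = s (beta y) -> q x y = q x' y'.
Proof.
rewrite inE => /andP [_ /forallP h] x y x' y' hx hy.
have /forallP /(_ (beta y)) /eqP := h (beta x).
rewrite (subq_bl (erefl _) (erefl _)) (subq_bl hx hy).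
by apply: nseq2_inj; apply: nb_pos.
Qed.

Lemma Stab_nb (s : {perm 'I_r}) : s \in Stab q beta -> forall d, nb (s d) = nb d.
Proof. by rewrite inE => /andP [/forallP h _] d; apply/eqP; apply: h. Qed.

Lemma Stab_intro (s : {perm 'I_r}) : (forall d, nb (s d) = nb d) ->
  (forall x y x' y', beta x' = s (beta x) -> beta y' = s (beta y) -> q x y = q x' y') ->
  s \in Stab q beta.
Proof.
move=> hn hq; rewrite inE; apply/andP; split; apply/forallP => b.
  by apply/eqP; apply: hn.
apply/forallP => c; apply/eqP.
have [x hx] := Hsurj b; have [y hy] := Hsurj c.
have [x' hx'] := Hsurj (s b); have [y' hy'] := Hsurj (s c).
rewrite (subq_bl hx hy) (subq_bl hx' hy') !hn (hq x y x' y') // ?hx ?hy //.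
Qed.

Lemma S_mem f : gr_aut v f -> sM (mat f) \in Stab q beta.
Proof.
move=> hfa.
have [g [hg _ _ hN]] := finv_mat hfa.
have u := mat_unit hfa.
have MN : mat f *m mat g = 1%:M by rewrite hN mulmxV.
have NM : mat g *m mat f = 1%:M by rewrite hN mulVmx.
have hbf := SL0 hfa; have hbg := SL0 hg.
have hr := unit_rows u.
apply: Stab_intro.
  move=> d; apply/eqP; rewrite eqn_leq (size_le _ hbf NM) /=.
  have [a ha] := Hsurj d; have [i /andP [h1 h2]] := prod_nz MN a.
  have := hbg _ _ h2; rewrite (hbf _ _ h1) ha => e.
  by rewrite [in X in (X <= _)%N]e; apply: (size_le _ hbg MN).
move=> x y x' y' hx hy.
have [j hj] := hr x; have [i hi] := hr y.
rewrite (claimA hfa hi hj); apply: q_block.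
  by rewrite (hbf _ _ hj) hx.
by rewrite (hbf _ _ hi) hy.
Qed.


Lemma L_rel M (s : {perm 'I_r}) : BM M s -> s \in Stab q beta ->
  q_relations q (fun i => \sum_a M a i *: v a).
Proof.
move=> hb hs i j /=.
rewrite mulr_suml [X in _ = _ *: X]mulr_suml scaler_sumr.
rewrite [RHS](eq_bigr (fun b => \sum_a q i j *: ((M b i *: v b) * (M a j *: v a)))); last first.
  by move=> b _; rewrite mulr_sumr scaler_sumr.
rewrite [RHS]exchange_big /=; apply: eq_bigr => a _; rewrite mulr_sumr; apply: eq_bigr => b _.
rewrite -!scalerAl -!scalerAr !scalerA (HS.1 b a) scalerA.
case: (M a j =P 0) => [->|/eqP nz1]; first by rewrite !(mul0r, mulr0, scale0r, scaler0).
case: (M b i =P 0) => [->|/eqP nz2]; first by rewrite !(mul0r, mulr0, scale0r, scaler0).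
rewrite (Stab_q hs (x' := i) (y' := j)); [congr (_ *: _); ring | exact: hb | exact: hb].
Qed.

Definition en (d : 'I_r) := enum (bl d).
Definition idx (a : 'I_n) : nat := index a (en (beta a)).

Lemma size_en d : size (en d) = nb d.
Proof. by rewrite /en /nb cardE. Qed.

Lemma idx_lt a : (idx a < nb (beta a))%N.
Proof. by rewrite /idx -size_en index_mem mem_enum mem_bl. Qed.

Lemma nth_idx x0 a : nth x0 (en (beta a)) (idx a) = a.
Proof. by rewrite /idx nth_index // mem_enum mem_bl. Qed.

Lemma beta_nth x0 d y : (y < nb d)%N -> beta (nth x0 (en d) y) = d.
Proof. by move=> hy; apply/eqP; rewrite -mem_bl -mem_enum mem_nth // size_en. Qed.

Lemma idx_nth x0 d y : (y < nb d)%N -> idx (nth x0 (en d) y) = y.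
Proof.
by move=> hy; rewrite /idx beta_nth // index_uniq ?size_en // enum_uniq.
Qed.

Lemma nth_def x0 x1 d y : (y < nb d)%N -> nth x0 (en d) y = nth x1 (en d) y.
Proof. by move=> hy; apply: set_nth_default; rewrite size_en. Qed.

Lemma idx_inj a b : beta a = beta b -> idx a = idx b -> a = b.
Proof. by move=> hb hi; rewrite -(nth_idx a a) -(nth_idx a b) hi hb. Qed.

Lemma ev_nth d (x : 'I_#|bl d|) x0 : enum_val x = nth x0 (en d) x.
Proof. by rewrite (enum_val_nth x0). Qed.

Lemma sum_block x0 d (G : 'I_n -> k) :
  \sum_(b | beta b == d) G b = \sum_(z < nb d) G (nth x0 (en d) z).
Proof.
transitivity (\sum_(b <- en d) G b).
  by rewrite /en big_enum; apply: eq_bigl => b; rewrite mem_bl.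
by rewrite (big_nth x0) size_en big_mkord.
Qed.

Definition Mraw (E : 'I_r -> nat -> nat -> k) (s : 'I_r -> 'I_r) : 'M[k]_n :=
  \matrix_(a, i) if beta i == s (beta a) then E (beta a) (idx a) (idx i) else 0.

Lemma Mraw_BM E s : BM (Mraw E s) s.
Proof. by move=> a i; rewrite mxE; case: (beta i =P s (beta a)) => // _; rewrite eqxx. Qed.

Lemma Mraw_mul E E' (s t : {perm 'I_r}) :
  Mraw E s *m Mraw E' t =
  Mraw (fun c x y => \sum_(z < nb (s c)) E c x z * E' (s c) z y) (s * t)%g.
Proof.
apply/matrixP => a i'; rewrite !mxE permM.
under eq_bigr do rewrite !mxE.
rewrite (bigID (fun i => beta i == s (beta a))) /= [X in _ + X]big1 ?addr0; last first.
  by move=> i /negbTE ->; rewrite mul0r.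
case: (beta i' =P t (s (beta a))) => [e|ne].
  rewrite (sum_block a); apply: eq_bigr => z _.
  have hz := ltn_ord z.
  by rewrite beta_nth // eqxx -e eqxx idx_nth.
by rewrite big1 // => i /eqP ->; case: (beta i' =P t (s (beta a))) => // e; rewrite mulr0.
Qed.

Definition entN m (B : 'M[k]_m) (x y : nat) : k :=
  match insub x, insub y with Some x', Some y' => B x' y' | _, _ => 0 end.

Lemma entN_val m (B : 'M[k]_m) (x y : 'I_m) : entN B x y = B x y.
Proof. by rewrite /entN !valK. Qed.

Lemma entN_out m (B : 'M[k]_m) (x y : nat) : ~~ (x < m)%N || ~~ (y < m)%N -> entN B x y = 0.
Proof.
rewrite /entN => h; case: insubP => [x' hx' _|//]; case: insubP => [y' hy' _|//].
by rewrite hx' hy' in h.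
Qed.

Lemma entN_mul m (B C : 'M[k]_m) x y :
  \sum_(z < m) entN B x z * entN C z y = entN (B *m C) x y.
Proof.
case: (ltnP x m) => hx; last first.
  rewrite [RHS]entN_out; last by rewrite -leqNgt hx.
  by rewrite big1 // => z _; rewrite entN_out ?mul0r // -leqNgt hx.
case: (ltnP y m) => hy; last first.
  rewrite [RHS]entN_out; last by apply/orP; right; rewrite -leqNgt.
  by rewrite big1 // => z _; rewrite [entN C _ _]entN_out ?mulr0 //; apply/orP; right; rewrite -leqNgt.
rewrite -[x]/(val (Ordinal hx)) -[y]/(val (Ordinal hy)) entN_val mxE.
by apply: eq_bigr => z _; rewrite !entN_val.
Qed.


Definition ev c (x : 'I_(nb c)) : 'I_n := enum_val (A := [in bl c]) x.

Lemma evE c (x : 'I_(nb c)) x0 : ev x = nth x0 (en c) x.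
Proof. exact: enum_val_nth. Qed.

Definition decs (M : 'M[k]_n) (s : 'I_r -> 'I_r) (c : 'I_r) : 'M[k]_(nb c) :=
  \matrix_(x, y) M (ev x) (nth (ev x) (en (s c)) y).

Lemma decs_E M s c (x y : 'I_(nb c)) x0 : nb (s c) = nb c ->
  decs M s c x y = M (nth x0 (en c) x) (nth x0 (en (s c)) y).
Proof.
by move=> hs; rewrite mxE (nth_def (ev x) x0) ?hs ?ltn_ord // (evE _ x0).
Qed.

Lemma decs_Mraw E s c (x y : 'I_(nb c)) : nb (s c) = nb c ->
  decs (Mraw E s) s c x y = E c x y.
Proof.
move=> hs; rewrite (decs_E _ _ _ (ev x)) // mxE.
have hx := ltn_ord x; have hy : (y < nb (s c))%N by rewrite hs.
by rewrite !beta_nth // eqxx !idx_nth.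
Qed.

Lemma BM_Mraw M s : BM M s -> (forall c, nb (s c) = nb c) ->
  M = Mraw (fun c => entN (decs M s c)) s.
Proof.
move=> hb hs; apply/matrixP => a i; rewrite mxE.
case: (beta i =P s (beta a)) => [e|ne]; last first.
  by apply/eqP; apply: contraT => nz; case: ne; apply: hb.
have ha := idx_lt a; have hi : (idx i < nb (beta a))%N by rewrite -hs -e idx_lt.
rewrite -[idx a]/(val (Ordinal ha)) -[idx i]/(val (Ordinal hi)) entN_val.
by rewrite (decs_E _ _ _ a) // /= nth_idx -e nth_idx.
Qed.

Lemma mxtransp_E m m' (B : 'M[k]_m) (x y : 'I_m') : m = m' -> mxtransp m' B x y = entN B x y.
Proof.
move=> e; subst m'; rewrite /mxtransp; case: eqP => // e'.
by rewrite castmxE -[x in RHS](cast_ord_id) -[y in RHS](cast_ord_id) -entN_val.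
Qed.

Lemma sum_ord_eq m m' (F : nat -> k) : m = m' -> \sum_(z < m) F z = \sum_(z < m') F z.
Proof. by move->. Qed.

Lemma decs_mul M N (s t : {perm 'I_r}) c : BM M s -> BM N t ->
  (forall c, nb (s c) = nb c) -> (forall c, nb (t c) = nb c) ->
  decs (M *m N) (s * t)%g c = decs M s c *m mxtransp (nb c) (decs N t (s c)).
Proof.
move=> hM hN hs ht.
have hst : forall c, nb ((s * t)%g c) = nb c by move=> d; rewrite permM ht hs.
rewrite {1}(BM_Mraw hM hs) {1}(BM_Mraw hN ht) Mraw_mul.
apply/matrixP => x y; rewrite decs_Mraw // mxE.
rewrite (sum_ord_eq (fun z => entN (decs M s c) x z * entN (decs N t (s c)) z y) (hs c)).
apply: eq_bigr => z _; rewrite -entN_val; congr (_ * _).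
by rewrite mxtransp_E.
Qed.

Lemma decs_one c : decs 1%:M (1%g : {perm 'I_r}) c = 1%:M.
Proof.
apply/matrixP => x y; rewrite (decs_E _ _ _ (ev x)) ?perm1 // !mxE.
by rewrite nth_uniq ?size_en // enum_uniq.
Qed.


Lemma Stab_subq (s : {perm 'I_r}) : s \in Stab q beta -> forall b c,
  Defs.subq q (bl b) (bl c) = Defs.subq q (bl (s b)) (bl (s c)).
Proof.
by rewrite inE => /andP [_ /forallP h] b c; have /forallP /(_ c) /eqP := h b.
Qed.

Lemma Stab_group : group_set (Stab q beta).
Proof.
apply/group_setP; split.
  rewrite inE; apply/andP; split; apply/forallP => b; rewrite ?perm1 //.
  by apply/forallP => c; rewrite !perm1.
move=> s t hs ht; rewrite inE; apply/andP; split; apply/forallP => b.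
  by apply/eqP; rewrite permM; exact: (etrans (Stab_nb ht (s b)) (Stab_nb hs b)).
apply/forallP => c; apply/eqP; rewrite !permM.
by rewrite (Stab_subq hs) (Stab_subq ht).
Qed.

Lemma Stab_max (H : {group {perm 'I_r}}) :
  diag_orbit_partition H = diag_orbit_partition (Stab q beta) -> H \subset Stab q beta.
Proof.
move=> heq; apply/subsetP => h hH.
have key : forall b c, exists x : 'I_r * 'I_r, exists2 g, g \in Stab q beta &
    exists2 g', g' \in Stab q beta &
    [/\ g x.1 = b, g x.2 = c, g' x.1 = h b & g' x.2 = h c].
  move=> b c.
  have : diagorb H (b, c) \in diag_orbit_partition H by apply: imset_f.
  rewrite heq => /imsetP [x _ ex].
  have : (b, c) \in diagorb H (b, c).
    by apply/imsetP; exists 1%g; rewrite ?group1 // !perm1.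
  rewrite ex => /imsetP [g hg [e1 e2]].
  have : (h b, h c) \in diagorb H (b, c) by apply/imsetP; exists h.
  rewrite ex => /imsetP [g' hg' [e1' e2']].
  by exists x; exists g => //; exists g'.
rewrite inE; apply/andP; split; apply/forallP => b.
  have [x [g hg [g' hg' [e1 _ e1' _]]]] := key b b.
  apply/eqP; change (nb (h b) = nb b).
  by rewrite -e1' -e1 (Stab_nb hg) (Stab_nb hg').
apply/forallP => c; apply/eqP.
have [x [g hg [g' hg' [e1 e2 e1' e2']]]] := key b c.
by rewrite -e1' -e2' -e1 -e2 -(Stab_subq hg) -(Stab_subq hg').
Qed.

Lemma Stab_inv (s : {perm 'I_r}) : s \in Stab q beta -> s^-1%g \in Stab q beta.
Proof. by move=> hs; rewrite -[Stab q beta]/(gval (Group Stab_group)) groupV. Qed.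


Lemma sM_mul f g : gr_aut v f -> gr_aut v g ->
  sM (mat f *m mat g) = (sM (mat f) * sM (mat g))%g.
Proof.
move=> hf hg; apply: sM_spec; first exact: BM_mul (SL0 hf) (SL0 hg).
by apply: unit_rows; rewrite unitmx_mul !mat_unit.
Qed.

Lemma mat_comp f g : gr_aut v f -> gr_aut v g -> mat (f \o g) = mat f *m mat g.
Proof. by move=> hf hg; apply: mat_rep; apply: rep_comp hf.1 (gr_rep hf) (gr_rep hg). Qed.

Lemma Mraw_ext E E' (s : 'I_r -> 'I_r) :
  (forall c x y, (x < nb c)%N -> (y < nb (s c))%N -> E c x y = E' c x y) ->
  Mraw E s = Mraw E' s.
Proof.
move=> h; apply/matrixP => a i; rewrite !mxE; case: eqP => // e.
by apply: h; rewrite ?idx_lt // -e idx_lt.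
Qed.

Lemma Mraw_one : Mraw (fun c x y => (x == y)%:R) (1%g : {perm 'I_r}) = 1%:M.
Proof.
apply/matrixP => a i; rewrite !mxE perm1; case: eqP => e.
  case: (a =P i) => [->|ne]; first by rewrite !eqxx.
  by rewrite (introF eqP) //; apply: contra_not ne; apply: idx_inj.
by case: (a =P i) => // ai; case: e; rewrite ai.
Qed.

Lemma entN_1 m x y : (x < m)%N -> (y < m)%N -> entN (1%:M : 'M[k]_m) x y = (x == y)%:R.
Proof.
by move=> hx hy; rewrite -[x]/(val (Ordinal hx)) -[y]/(val (Ordinal hy)) entN_val mxE.
Qed.


Lemma surj_part (F : forall c : 'I_r, 'M[k]_(nb c)) (s : {perm 'I_r}) :
  (forall c, F c \in unitmx) -> s \in Stab q beta ->
  exists2 f, gr_aut v f & mat f = Mraw (fun c => entN (F c)) s.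
Proof.
move=> hF hS.
have hs := Stab_nb hS; have hsi := Stab_inv hS; have hs' := Stab_nb hsi.
set Mx := Mraw (fun c => entN (F c)) s.
set Nx := Mraw (fun d => entN (invmx (F (s^-1%g d)))) s^-1%g.
have MN : Mx *m Nx = 1%:M.
  rewrite Mraw_mul mulgV -Mraw_one; apply: Mraw_ext => c x y hx hy /=.
  rewrite perm1 in hy.
  rewrite permK (sum_ord_eq (fun z => entN (F c) x z * entN (invmx (F c)) z y) (hs c)).
  by rewrite entN_mul mulmxV // entN_1.
have NM : Nx *m Mx = 1%:M.
  rewrite Mraw_mul mulVg -Mraw_one; apply: Mraw_ext => c x y hx hy /=.
  rewrite perm1 in hy.
  by rewrite entN_mul mulVmx // entN_1 // hs'.
have rM := L_rel (Mraw_BM (E := fun c => entN (F c)) (s := s)) hS.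
have rN := L_rel (Mraw_BM (E := fun d => entN (invmx (F (s^-1%g d)))) (s := s^-1%g)) hsi.
have [[f [hf fv]] _] := HS.2 _ _ rM.
have [[g [hg gv]] _] := HS.2 _ _ rN.
have uniq := (HS.2 _ _ HS.1).2.
have fg : cancel g f.
  move=> z; apply: (uniq (f \o g) id (ah_comp hf hg) (@ah_id _ _)) => i.
  by rewrite (rep_comp hf fv gv) MN [RHS]v_span; apply: eq_bigr => a _; rewrite mxE.
have gf : cancel f g.
  move=> z; apply: (uniq (g \o f) id (ah_comp hg hf) (@ah_id _ _)) => i.
  by rewrite (rep_comp hg gv fv) NM [RHS]v_span; apply: eq_bigr => a _; rewrite mxE.
exists f; last exact: mat_rep.
split => //; split; first by exists g.
by move=> d z; apply: homog_map hf fv.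
Qed.


Definition phi (f : A -> A) : sd_elt k nb :=
  (finfun (fun c => decs (mat f) (sM (mat f)) c), sM (mat f)).

Lemma phi1 f c : (phi f).1 c = decs (mat f) (sM (mat f)) c.
Proof. by rewrite /phi /= ffunE. Qed.

Lemma main_sec :
  [/\ group_set (Stab q beta),
      (forall H : {group {perm 'I_r}},
         diag_orbit_partition H = diag_orbit_partition (Stab q beta) -> H \subset Stab q beta)
    & exists n_ : 'I_r -> nat,
      [/\ forall c, (0 < n_ c)%N,
          forall s c, s \in Stab q beta -> n_ (s c) = n_ c
        & exists phi : (A -> A) -> sd_elt k n_,
          [/\ forall f, gr_aut v f -> sd_in (Stab q beta) (phi f),
              forall f g, gr_aut v f -> gr_aut v g -> phi f = phi g -> f =1 g,
              forall x, sd_in (Stab q beta) x -> exists2 f, gr_aut v f & phi f = x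
            & forall f g, gr_aut v f -> gr_aut v g ->
                phi (f \o g) = sd_mul (phi f) (phi g)]]].
Proof.
split; [exact: Stab_group | exact: Stab_max | exists nb; split].
- exact: nb_pos.
- by move=> s c hs; apply: Stab_nb.
exists phi; split.
- move=> f hf; split; last exact: S_mem.
  move=> c; rewrite phi1.
  have [g [hg _ _ hN]] := finv_mat hf.
  have MN : mat f *m mat g = 1%:M by rewrite hN mulmxV // mat_unit.
  have hsf := Stab_nb (S_mem hf); have hsg := Stab_nb (S_mem hg).
  have e1 : (sM (mat f) * sM (mat g))%g = 1%g.
    rewrite -sM_mul // MN; apply: sM_spec; first by move=> a i; rewrite mxE perm1; case: (a =P i) => [-> //|_]; rewrite /= mulr0n eqxx.
    by apply: unit_rows; exact: unitmx1.
  have := decs_mul c (SL0 hf) (SL0 hg) hsf hsg.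
  by rewrite MN e1 decs_one => /esym /mulmx1_unit [].
- move=> f g hf hg e.
  have es : sM (mat f) = sM (mat g) by have := congr1 snd e.
  have ed : forall c, decs (mat f) (sM (mat f)) c = decs (mat g) (sM (mat g)) c.
    by move=> c; rewrite -!phi1 e.
  have em : mat f = mat g.
    rewrite (BM_Mraw (SL0 hf) (Stab_nb (S_mem hf))) (BM_Mraw (SL0 hg) (Stab_nb (S_mem hg))).
    rewrite es; apply: Mraw_ext => c x y _ _; by have := ed c; rewrite es => ->.
  apply: (HS.2 _ _ HS.1).2; [exact: hf.1 | exact: hg.1 | move=> i].
  by rewrite (gr_rep hf) (gr_rep hg) em.
- case=> F s [hF hS].
  have [f hf em] := surj_part (F := fun c => F c) hF hS.
  exists f => //.
  have hs := Stab_nb hS.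
  have es : sM (mat f) = s.
    rewrite em; apply: sM_spec; first exact: Mraw_BM.
    by apply: unit_rows; rewrite -em mat_unit.
  rewrite /phi es; congr pair; apply/ffunP => c; rewrite ffunE em.
  by apply/matrixP => x y; rewrite decs_Mraw // entN_val.
- move=> f g hf hg.
  rewrite /sd_mul /phi mat_comp // sM_mul //; congr pair; apply/ffunP => c.
  rewrite !ffunE decs_mul //; [exact: SL0 | exact: SL0 | exact: Stab_nb (S_mem hf) | exact: Stab_nb (S_mem hg)].
Qed.

End Core.


End Helpers.

Theorem corollary6p1 (k : fieldType) (n r : nat) (q : 'M[k]_n)
    (A : algType k) (v : 'I_n -> A) (beta : 'I_n -> 'I_r) :
  qparam q ->
  is_Sq q v ->
  (forall c : 'I_r, exists i, beta i = c) ->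
  (forall i j : 'I_n, (beta i == beta j) = (row i q == row j q)) ->
  [/\ group_set (Stab q beta),
      (forall H : {group {perm 'I_r}},
         diag_orbit_partition H = diag_orbit_partition (Stab q beta) -> H \subset Stab q beta)
    & exists n_ : 'I_r -> nat,
      [/\ forall c, (0 < n_ c)%N,
          forall s c, s \in Stab q beta -> n_ (s c) = n_ c
        & exists phi : (A -> A) -> sd_elt k n_,
          [/\ forall f, gr_aut v f -> sd_in (Stab q beta) (phi f),
              forall f g, gr_aut v f -> gr_aut v g -> phi f = phi g -> f =1 g,
              forall x, sd_in (Stab q beta) x -> exists2 f, gr_aut v f & phi f = x
            & forall f g, gr_aut v f -> gr_aut v g ->
                phi (f \o g) = sd_mul (phi f) (phi g)]]].
Proof.
move=> Hq HS Hsurj Hrow.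
have [P0 [hP0 hP0v]] := Helpers.model0 HS.
exact: (Helpers.main_sec Hq HS hP0 hP0v Hsurj Hrow).
Qed.
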